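(* Let $H,K$ be Hilbert spaces, let $T_1$ be a densely defined closed operator on $H$ with closed range and $T_2$ a densely defined closed operator from $D(T_2)\subset K$ into $H$ with closed range, and suppose $R(T_1)\perp R(T_2)$ in $H$. Let $T=\begin{bmatrix}T_1 & T_2\\ 0 & 0\end{bmatrix}$ be the operator on $H\bigoplus K$ with domain $D(T_1)\bigoplus D(T_2)$ given by $T(x_1,x_2)=(T_1x_1+T_2x_2,\,0)$. Then $T^{\dagger}=\begin{bmatrix}T_1^{\dagger} & 0\\ T_2^{\dagger} & 0\end{bmatrix}$, i.e. $T^{\dagger}(y_1,y_2)=(T_1^{\dagger}y_1,\,T_2^{\dagger}y_1)$.
   Context: $H\bigoplus K$ is the Hilbert direct sum. For a closed operator $A$ (with closed range), $C(A)=D(A)\cap N(A)^{\perp}$ and the Moore–Penrose inverse $A^{\dagger}$ is defined on $R(A)\oplus^{\perp}R(A)^{\perp}$ by $A^{\dagger}y=(A|_{C(A)})^{-1}y$ for $y\in R(A)$ and $A^{\dagger}y=0$ for $y\in R(A)^{\perp}$. *)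

(* Defs.v *)
From mathcomp Require Import all_boot all_algebra.
From mathcomp Require Import complex.
From mathcomp Require Import boolp classical_sets reals.
Import GRing.Theory Num.Theory.

Set Implicit Arguments.
Unset Strict Implicit.
Unset Printing Implicit Defensive.

Local Open Scope ring_scope.
Local Open Scope classical_set_scope.

Section Hilbert.
Variable R : realType.
Variable V : lmodType R[i].
Variable ip : V -> V -> R[i].

Definition is_inner_product : Prop :=
  [/\ (forall (a : R[i]) (x y z : V), ip (a *: x + y) z = a * ip x z + ip y z),
      (forall x y : V, ip y x = (ip x y)^*),
      (forall x : V, 0 <= ip x x) &
      (forall x : V, ip x x = 0 -> x = 0)].

(* u n --> x in the norm ||v|| = sqrt (ip v v) (we compare squared norms;
   positive elements of R[i] are exactly the positive reals) *)
Definition seq_cvg_to (u : nat -> V) (x : V) : Prop :=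
  forall e : R[i], 0 < e ->
    exists N : nat, forall n : nat, (N <= n)%N -> ip (u n - x) (u n - x) < e.

Definition seq_cauchy (u : nat -> V) : Prop :=
  forall e : R[i], 0 < e ->
    exists N : nat, forall m n : nat, (N <= m)%N -> (N <= n)%N ->
      ip (u m - u n) (u m - u n) < e.

Definition is_hilbert : Prop :=
  is_inner_product /\
  (forall u : nat -> V, seq_cauchy u -> exists x, seq_cvg_to u x).

Definition is_closed_set (S : set V) : Prop :=
  forall (u : nat -> V) (x : V), (forall n, S (u n)) -> seq_cvg_to u x -> S x.

Definition is_dense (S : set V) : Prop :=
  forall x : V, exists u : nat -> V, (forall n, S (u n)) /\ seq_cvg_to u x.

Definition is_subspace (S : set V) : Prop :=
  S 0 /\ (forall (a : R[i]) (x y : V), S x -> S y -> S (a *: x + y)).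

Definition orth (S : set V) : set V := [set y | forall x, S x -> ip x y = 0].

End Hilbert.

Definition sum_ip (R : realType) (V W : lmodType R[i])
  (ipV : V -> V -> R[i]) (ipW : W -> W -> R[i]) : V * W -> V * W -> R[i] :=
  fun x y => ipV x.1 y.1 + ipW x.2 y.2.

(* (possibly unbounded) operators: a domain and an action on it *)
Record op (R : realType) (V W : lmodType R[i]) := Op {
  dom : set V;
  app : V -> W
}.
Arguments Op {R V W}.

Section Operators.
Variable R : realType.
Variables V W : lmodType R[i].
Variable ipV : V -> V -> R[i].
Variable ipW : W -> W -> R[i].
Variable A : op V W.

Definition op_linear : Prop :=
  is_subspace (dom A) /\
  (forall (a : R[i]) (x y : V), dom A x -> dom A y ->
     app A (a *: x + y) = a *: app A x + app A y).

Definition range_op : set W := [set app A x | x in dom A].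
Definition kernel_op : set V := [set x | dom A x /\ app A x = 0].

Definition densely_defined : Prop := is_dense ipV (dom A).

Definition closed_op : Prop :=
  op_linear /\
  (forall (u : nat -> V) (x : V) (y : W),
     (forall n, dom A (u n)) -> seq_cvg_to ipV u x ->
     seq_cvg_to ipW (fun n => app A (u n)) y ->
     dom A x /\ app A x = y).

Definition closed_range : Prop := is_closed_set ipW range_op.

Definition coimage_dom : set V := dom A `&` orth ipV kernel_op.

(* Moore-Penrose inverse: domain R(A) ⊕ R(A)^⊥; for y = y1 + y2 with
   y1 ∈ R(A), y2 ∈ R(A)^⊥, A^† y = (A|_{C(A)})^{-1} y1 *)
Definition mp_dom : set W :=
  [set y | exists y1 y2, range_op y1 /\ orth ipW range_op y2 /\ y = y1 + y2].

Definition mp_app (y : W) : V :=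
  xget 0 [set x | coimage_dom x /\
                  exists y2, orth ipW range_op y2 /\ y = app A x + y2].

Definition mp_inverse : op W V := Op mp_dom mp_app.

End Operators.

Definition op_eq (R : realType) (V W : lmodType R[i]) (A B : op V W) : Prop :=
  dom A = dom B /\ (forall x, dom A x -> app A x = app B x).

Definition upper_row_op (R : realType) (H K : lmodType R[i])
  (T1 : op H H) (T2 : op K H) : op (H * K)%type (H * K)%type :=
  Op [set x | dom T1 x.1 /\ dom T2 x.2]
     (fun x => (app T1 x.1 + app T2 x.2, 0)).

Definition left_col_op (R : realType) (H K : lmodType R[i])
  (S1 : op H H) (S2 : op H K) : op (H * K)%type (H * K)%type :=
  Op [set y | dom S1 y.1 /\ dom S2 y.1]
     (fun y => (app S1 y.1, app S2 y.1)).

(* Main.v *)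
Require Import Defs.
From mathcomp Require Import all_boot all_algebra.
From mathcomp Require Import complex.
From mathcomp Require Import boolp classical_sets reals.
From mathcomp Require Import lra order.
Import Order.TTheory GRing.Theory Num.Theory.
Set Implicit Arguments.
Unset Strict Implicit.
Local Open Scope ring_scope.
Local Open Scope classical_set_scope.
Local Open Scope complex_scope.
Local Notation Re := complex.Re.
Local Notation Im := complex.Im.

Section CX.
Variable R : realType.
Lemma NconjE (x : R[i]) : Num.conj x = conjc x. Proof. by []. Qed.
Lemma ReD (x y : R[i]) : Re (x + y) = Re x + Re y.
Proof. by case: x => a b; case: y => c d; simpc; done. Qed.
Lemma ReJ (x : R[i]) : Re (Num.conj x) = Re x.
Proof. by rewrite NconjE; case: x => a b; simpc; done. Qed.
Lemma ReRM (c : R) (x : R[i]) : Re (c%:C * x) = c * Re x.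
Proof. by case: x => a b; simpc; done. Qed.
Lemma ReN (x : R[i]) : Re (- x) = - Re x.
Proof. by case: x => a b; simpc; done. Qed.
Lemma conjR (c : R) : Num.conj (c%:C) = c%:C.
Proof. by rewrite NconjE; simpc; done. Qed.
Lemma Re_miM (x : R[i]) : Re (Num.conj 'i%C * x) = Im x.
Proof. by rewrite NconjE; case: x => a b; simpc; done. Qed.
Lemma conjD (x y : R[i]) : Num.conj (x + y) = Num.conj x + Num.conj y.
Proof. rewrite !NconjE; case: x => a b; case: y => c d; simpc; done. Qed.
Lemma conjM (x y : R[i]) : Num.conj (x * y) = Num.conj x * Num.conj y.
Proof. rewrite !NconjE; case: x => a b; case: y => c d; simpc; done. Qed.
Lemma conjN (x : R[i]) : Num.conj (- x) = - Num.conj x.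
Proof. rewrite !NconjE; case: x => a b; simpc; done. Qed.
Lemma conj0 : Num.conj (0 : R[i]) = 0.
Proof. rewrite !NconjE; simpc; done. Qed.
Lemma ReC (c : R) : Re (c%:C) = c. Proof. by []. Qed.
Lemma twoC : ((2%:R : R)%:C : R[i]) = 1 + 1. Proof. by simpc. Qed.
Lemma mulCC (c d : R) : (c%:C * d%:C : R[i]) = (c * d)%:C. Proof. by simpc. Qed.
Lemma oneC : ((1 : R)%:C : R[i]) = 1. Proof. by []. Qed.
Lemma inv_le (m k : nat) : (k <= m)%N -> m.+1%:R^-1 <= k.+1%:R^-1 :> R.
Proof. move=> h. rewrite lef_pV2 ?posrE ?ltr0Sn // ler_nat ltnS //. Qed.
Lemma quad0 (M r : R) : 0 <= M -> (forall t, 0 <= t^+2 * M - 2 * t * r) -> r = 0.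
Proof.
move=> M0 h. have := h (r / (M+1)). set t := r/(M+1).
have ht : t * (M+1) = r. by rewrite /t mulfVK // lt0r_neq0 //; lra.
rewrite -ht => h'. have -> : t = 0 by nra. by rewrite mul0r.
Qed.
End CX.

Section IP.
Variables (R : realType) (V : lmodType R[i]) (ip : V -> V -> R[i]).
Hypothesis hip : is_inner_product ip.

Lemma ipDZl a x y z : ip (a *: x + y) z = a * ip x z + ip y z.
Proof. by case: hip. Qed.
Lemma ipC x y : ip y x = Num.conj (ip x y).
Proof. by case: hip. Qed.
Lemma ip_ge0 x : 0 <= ip x x.
Proof. by case: hip. Qed.
Lemma ip_eq0 x : ip x x = 0 -> x = 0.
Proof. by case: hip => _ _ _; apply. Qed.

Lemma ip0l z : ip 0 z = 0.
Proof.
have := ipDZl 1 0 0 z. rewrite scaler0 addr0 mul1r => h.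
rewrite -[X in X = _ + _]addr0 in h. by move/addrI: h.
Qed.
Lemma ipDl x y z : ip (x + y) z = ip x z + ip y z.
Proof. by rewrite -(scale1r x) ipDZl mul1r scale1r. Qed.
Lemma ipZl a x z : ip (a *: x) z = a * ip x z.
Proof. by rewrite -(addr0 (a *: x)) ipDZl ip0l addr0. Qed.
Lemma ipNl x z : ip (- x) z = - ip x z.
Proof. by rewrite -scaleN1r ipZl mulN1r. Qed.
Lemma ipBl x y z : ip (x - y) z = ip x z - ip y z.
Proof. by rewrite ipDl ipNl. Qed.
Lemma ipDr x y z : ip z (x + y) = ip z x + ip z y.
Proof. by rewrite ipC ipDl conjD -!ipC. Qed.
Lemma ipZr a x z : ip z (a *: x) = Num.conj a * ip z x.
Proof. by rewrite ipC ipZl conjM -ipC. Qed.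
Lemma ip0r z : ip z 0 = 0.
Proof. by rewrite ipC ip0l conj0. Qed.
Lemma ipNr x z : ip z (- x) = - ip z x.
Proof. by rewrite ipC ipNl conjN -ipC. Qed.
Lemma ipBr x y z : ip z (x - y) = ip z x - ip z y.
Proof. by rewrite ipDr ipNr. Qed.

Definition nrm2 x := Re (ip x x).

Lemma ipE x : ip x x = (nrm2 x)%:C.
Proof.
have := ger0_Im (ip_ge0 x); rewrite /nrm2; case: (ip x x) => a b /= ->. by [].
Qed.
Lemma nrm2_ge0 x : 0 <= nrm2 x.
Proof. by have := ip_ge0 x; rewrite ipE lecR. Qed.
Lemma nrm2_eq0 x : nrm2 x = 0 -> x = 0.
Proof. by move=> h; apply: ip_eq0; rewrite ipE h. Qed.
Lemma nrm2D x y : nrm2 (x + y) = nrm2 x + nrm2 y + 2 * Re (ip x y).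
Proof.
rewrite /nrm2 ipDl !ipDr !ReD [ip y x]ipC ReJ. lra.
Qed.
Lemma nrm2N x : nrm2 (- x) = nrm2 x.
Proof. by rewrite /nrm2 ipNl ipNr opprK. Qed.
Lemma nrm2B x y : nrm2 (x - y) = nrm2 x + nrm2 y - 2 * Re (ip x y).
Proof. rewrite nrm2D nrm2N ipNr ReN. lra. Qed.
Lemma nrm2Z (c : R) x : nrm2 (c%:C *: x) = c ^+ 2 * nrm2 x.
Proof. by rewrite /nrm2 ipZl ipZr conjR mulrA ipE -rmorphM ReRM. Qed.
Lemma Re_ipZl (c : R) x y : Re (ip (c%:C *: x) y) = c * Re (ip x y).
Proof. by rewrite ipZl ReRM. Qed.
Lemma Re_ipZr (c : R) x y : Re (ip x (c%:C *: y)) = c * Re (ip x y).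
Proof. by rewrite ipZr conjR ReRM. Qed.
Lemma nrm2_par x y : nrm2 (x + y) + nrm2 (x - y) = 2 * nrm2 x + 2 * nrm2 y.
Proof. rewrite nrm2D nrm2B. lra. Qed.

Lemma nrm2D_le (s : R) a b : 0 <= s ->
  s * nrm2 (a + b) <= s * (1 + s) * nrm2 a + (s + 1) * nrm2 b.
Proof.
move=> s0.
have h := nrm2_ge0 (s%:C *: a - b).
rewrite nrm2B nrm2Z Re_ipZl in h.
rewrite nrm2D. nra.
Qed.

Lemma cvgP u x : seq_cvg_to ip u x <->
  (forall e : R, 0 < e -> exists N : nat, forall n, (N <= n)%N -> nrm2 (u n - x) < e).
Proof.
split.
  move=> h e e0. have [|N HN] := h e%:C; first by rewrite ltcR.
  exists N => n /HN. by rewrite ipE ltcR.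
move=> h e; rewrite ltcE => /andP [/eqP hIm hRe].
have [N HN] := h _ hRe. exists N => n /HN hn.
rewrite ipE ltcE /= hIm eqxx /=. by [].
Qed.

Lemma cauchyP u :
  (forall e : R, 0 < e -> exists N : nat, forall m n, (N <= m)%N -> (N <= n)%N -> nrm2 (u m - u n) < e)
  -> seq_cauchy ip u.
Proof.
move=> h e; rewrite ltcE => /andP [/eqP hIm hRe].
have [N HN] := h _ hRe. exists N => m n hm hn.
rewrite ipE ltcE /= hIm eqxx /=. exact: HN.
Qed.

End IP.

Section Proj.
Variables (R : realType) (V : lmodType R[i]) (ip : V -> V -> R[i]).
Hypothesis hH : is_hilbert ip.
Let hip := hH.1.

Section Sub.
Variable N : set V.
Hypothesis sN : is_subspace N.
Lemma subD x y : N x -> N y -> N (x + y).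
Proof. by move=> hx hy; have := sN.2 1 x y hx hy; rewrite scale1r. Qed.
Lemma subZ a x : N x -> N (a *: x).
Proof. by move=> hx; have := sN.2 a x 0 hx sN.1; rewrite addr0. Qed.
Lemma subN x : N x -> N (- x).
Proof. by move=> hx; rewrite -scaleN1r; apply: subZ. Qed.
Lemma subB x y : N x -> N y -> N (x - y).
Proof. by move=> hx hy; apply: subD => //; apply: subN. Qed.
End Sub.

Theorem proj (N : set V) : is_subspace N -> is_closed_set ip N ->
  forall x, exists n, N n /\ orth ip N (x - n).
Proof.
move=> sN cN x.
pose S := [set r | exists n, N n /\ r = nrm2 ip (x - n)].
have S0 : S !=set0 by exists (nrm2 ip (x - 0)); exists 0; split => //; exact: sN.1.
have lbS : lbound S 0 by move=> y [n [_ ->]]; exact: nrm2_ge0.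
have hlb : has_lbound S by exists 0.
pose d := inf S.
have dle : forall n, N n -> d <= nrm2 ip (x - n).
  by move=> n Nn; apply: (ge_inf hlb); exists n.
have d0 : 0 <= d := lb_le_inf S0 lbS.
have hg : forall k : nat, exists n, N n /\ nrm2 ip (x - n) < d + k.+1%:R^-1.
  move=> k; have [|e [n [Nn ->]] he] := @inf_adherent R S (k.+1%:R^-1) _ (conj S0 hlb).
    by rewrite invr_gt0 ltr0Sn.
  by exists n.
have [g Hg] := choice hg.
have cau : forall k m, nrm2 ip (g k - g m) <= 2 * k.+1%:R^-1 + 2 * m.+1%:R^-1.
  move=> k m.
  pose mid := ((2%:R : R)^-1)%:C *: (g k + g m).
  have Nmid : N mid by apply: subZ => //; apply: subD => //; [exact: (Hg k).1 | exact: (Hg m).1].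
  have hab : (x - g k) + (x - g m) = (2%:R : R)%:C *: (x - mid).
    rewrite /mid scalerBr scalerA mulCC mulfV ?pnatr_eq0 // oneC scale1r twoC scalerDl scale1r.
    by rewrite addrACA opprD.
  have hpar := nrm2_par hip (x - g k) (x - g m).
  rewrite hab (nrm2Z hip) (_ : x - g k - (x - g m) = - (g k - g m)) ?(nrm2N hip) in hpar; last first.
    by rewrite !opprB addrC addrA subrK.
  have := dle _ Nmid. have := (Hg k).2. have := (Hg m).2.
  set ik := k.+1%:R^-1; set im := m.+1%:R^-1. rewrite expr2 in hpar. lra.
have gcau : seq_cauchy ip g.
  apply: (cauchyP hip) => e e0.
  have [k hk] := @ltr_add_invr R 0 (e / 4) ltac:(lra).
  exists k => m1 m2 h1 h2.
  have := cau m1 m2. have := inv_le R h1. have := inv_le R h2. rewrite add0r in hk.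
  set a1 := m1.+1%:R^-1; set a2 := m2.+1%:R^-1; set a3 := k.+1%:R^-1 in hk *. lra.
have [n cvn] := hH.2 g gcau.
have Nn : N n by apply: (cN g) => // k; exact: (Hg k).1.
have fle : nrm2 ip (x - n) <= d.
  apply/ler_addgt0Pr => e e0.
  pose eps := Num.min 1 (e / (d + 4)).
  have eps0 : 0 < eps by rewrite lt_min ltr01 /= divr_gt0 //; lra.
  have eps1 : eps <= 1 by rewrite ge_min lexx.
  have eps2 : eps <= e / (d + 4) by rewrite ge_min lexx orbT.
  have eps3 : eps * (d + 4) <= e by rewrite -ler_pdivlMr //; lra.
  have [N1 HN1] := (proj1 (cvgP hip g n) cvn) (eps ^+ 2) ltac:(by rewrite exprn_gt0).
  have [N2 HN2] := @ltr_add_invr R 0 eps eps0. rewrite add0r in HN2.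
  pose k := maxn N1 N2.
  have hk1 := HN1 k (leq_maxl _ _).
  have hk2 := (Hg k).2.
  have hk3 := inv_le R (leq_maxr N1 N2 : (N2 <= k)%N).
  have := nrm2D_le hip (x - g k) (g k - n) (ltW eps0).
  rewrite addrA subrK.
  have := nrm2_ge0 hip (x - g k). have := nrm2_ge0 hip (g k - n).
  set A := nrm2 ip (x - g k); set B := nrm2 ip (g k - n); set F := nrm2 ip (x - n).
  rewrite -/k in hk2 hk3.
  set ik := k.+1%:R^-1 in hk2 hk3; set i2 := N2.+1%:R^-1 in HN2 hk3.
  move=> B0 A0 hle.
  have hA : A <= d + eps by lra.
  suff : eps * F <= eps * (d + e) by rewrite ler_pM2l.
  nra.
have fd : nrm2 ip (x - n) = d by apply/le_anti; rewrite fle dle.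
have hre : forall m, N m -> Re (ip (x - n) m) = 0.
  move=> m Nm; apply: (quad0 (nrm2_ge0 hip m)) => t.
  have := dle (t%:C *: m + n) (subD sN (subZ sN _ Nm) Nn).
  rewrite opprD addrA addrAC (nrm2B hip) (nrm2Z hip) (Re_ipZr hip) fd. lra.
exists n; split => // m Nm.
have r1 := hre m Nm.
have r2 := hre ('i *: m) (subZ sN _ Nm).
rewrite (ipZr hip) Re_miM in r2.
rewrite (ipC hip) (complexE (ip (x - n) m)) r1 r2.
rewrite mulr0 addr0. exact: conj0.
Qed.
End Proj.

Lemma grp (G : zmodType) (a b c d : G) : a + c = b + d -> a - b = d - c.
Proof. move=> e. rewrite -[a](addrK c) e. rewrite addrAC [b + d]addrC addrK. done. Qed.

Section Ops.
Variables (R : realType) (V W : lmodType R[i]).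
Variables (ipV : V -> V -> R[i]) (ipW : W -> W -> R[i]).
Variable A : op V W.
Hypotheses (hipV : is_inner_product ipV) (hipW : is_inner_product ipW).
Hypothesis lin : op_linear A.

Lemma dom0 : dom A 0. Proof. exact: lin.1.1. Qed.
Lemma app0 : app A 0 = 0.
Proof.
have := lin.2 1 0 0 dom0 dom0. rewrite scaler0 addr0 scale1r => h.
rewrite -[X in X = _ + _]addr0 in h. by move/addrI: h.
Qed.
Lemma domB x y : dom A x -> dom A y -> dom A (x - y).
Proof. move=> hx hy; rewrite addrC -scaleN1r; exact: lin.1.2. Qed.
Lemma appB x y : dom A x -> dom A y -> app A (x - y) = app A x - app A y.
Proof.
move=> hx hy; rewrite addrC -scaleN1r lin.2 // scaleN1r addrC //.
Qed.

Definition PP (y : W) (x : V) := coimage_dom ipV A x /\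
  exists y2, orth ipW (range_op A) y2 /\ y = app A x + y2.

Lemma mp_uniq y x x' : PP y x -> PP y x' -> x = x'.
Proof.
move=> [[Dx ox] [z [oz ey]]] [[Dx' ox'] [z' [oz' ey']]].
have Dd := domB Dx Dx'.
have Ad : app A (x - x') = z' - z.
  rewrite appB //; apply: grp; by rewrite -ey -ey'.
have Ad0 : app A (x - x') = 0.
  apply: (ip_eq0 hipW). rewrite {2}Ad (ipBr hipW).
  have hr : range_op A (app A (x - x')) by exists (x - x').
  by rewrite (oz' _ hr) (oz _ hr) subrr.
have kd : kernel_op A (x - x') by split.
apply/eqP; rewrite -subr_eq0; apply/eqP; apply: (ip_eq0 hipV).
by rewrite (ipBr hipV) (ox _ kd) (ox' _ kd) subrr.
Qed.

Lemma ker_sub : is_subspace (kernel_op A).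
Proof.
split; first by split; [exact: dom0 | exact: app0].
move=> a x y [Dx Ax] [Dy Ay]; split; first exact: lin.1.2.
by rewrite lin.2 // Ax Ay scaler0 addr0.
Qed.

Lemma mp_ex (hV : is_hilbert ipV) (cl : closed_op ipV ipW A) y1 y2 :
  range_op A y1 -> orth ipW (range_op A) y2 -> exists x, PP (y1 + y2) x.
Proof.
move=> [x0 Dx0 <-] oy2.
have ckl : is_closed_set ipV (kernel_op A).
  move=> u x hu cu.
  have [] := cl.2 u x 0 (fun n => (hu n).1) cu.
    move=> e e0; exists 0%N => n _. by rewrite (hu n).2 subrr (ip0l hipW).
  by split.
have [n [[Dn An] on]] := proj hV ker_sub ckl x0.
exists (x0 - n); split; first by split => //; exact: domB.
exists y2; split => //. by rewrite appB // An subr0.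
Qed.

End Ops.

Section Main.
Variables (R : realType) (H : lmodType R[i]) (ipH : H -> H -> R[i]).
Variables (K : lmodType R[i]) (ipK : K -> K -> R[i]).
Hypotheses (hH : is_hilbert ipH) (hK : is_hilbert ipK).
Variables (T1 : op H H) (T2 : op K H).
Hypotheses (cl1 : closed_op ipH ipH T1) (cl2 : closed_op ipK ipH T2).
Hypothesis horth : forall y1 y2 : H, range_op T1 y1 -> range_op T2 y2 -> ipH y1 y2 = 0.
Let hiH := hH.1.
Let hiK := hK.1.
Let lin1 := cl1.1.
Let lin2 := cl2.1.
Let T := upper_row_op T1 T2.
Let sip := sum_ip ipH ipK.

Lemma horth' r1 r2 : range_op T1 r1 -> range_op T2 r2 -> ipH r2 r1 = 0.
Proof. by move=> h1 h2; rewrite (ipC hiH) horth // conj0. Qed.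

Lemma orthT_elim z k : orth sip (range_op T) (z, k) ->
  forall x1 x2, dom T1 x1 -> dom T2 x2 -> ipH (app T1 x1 + app T2 x2) z = 0.
Proof.
move=> h x1 x2 D1 D2.
have := h (app T (x1, x2)) (ltac:(by exists (x1, x2))).
by rewrite /sip /sum_ip /= (ip0l hiK) addr0.
Qed.

Lemma fwd x1 x2 z k : dom T1 x1 -> dom T2 x2 -> orth sip (range_op T) (z, k) ->
  orth ipH (range_op T1) (app T2 x2 + z) /\ orth ipH (range_op T2) (app T1 x1 + z).
Proof.
move=> D1 D2 oz; split.
  move=> r [u Du <-]. rewrite (ipDr hiH) horth; [|by exists u|by exists x2].
  have := orthT_elim oz Du (dom0 lin2). by rewrite (app0 lin2) addr0 add0r.
move=> r [u Du <-]. rewrite (ipDr hiH) horth'; [|by exists x1|by exists u].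
have := orthT_elim oz (dom0 lin1) Du. by rewrite (app0 lin1) add0r add0r.
Qed.

Lemma combo r1 z1 r2 z2 k : range_op T1 r1 -> orth ipH (range_op T1) z1 ->
  range_op T2 r2 -> orth ipH (range_op T2) z2 -> r1 + z1 = r2 + z2 ->
  orth sip (range_op T) (z1 - r2, k).
Proof.
move=> h1 o1 h2 o2 e.
move=> [p q] [[u1 u2] [D1 D2] <-].
rewrite /sip /sum_ip /= (ip0l hiK) addr0 (ipDl hiH).
have e' : z1 - r2 = z2 - r1.
  by apply: grp; rewrite addrC e.
rewrite {2}e' !(ipBr hiH) (o1 _ (ltac:(by exists u1))) (o2 _ (ltac:(by exists u2))).
rewrite horth; [|by exists u1|by []]. rewrite horth'; [|by []|by exists u2].
by rewrite !subrr addr0.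
Qed.

Lemma pair_dec a1 a2 z1 h k : h = app T1 a1 + z1 ->
  (h, k) = app T (a1, a2) + (z1 - app T2 a2, k).
Proof.
move=> ->. apply: injective_projections => /=; last by rewrite add0r.
by rewrite addrACA subrr addr0.
Qed.

Lemma dom_eq y : mp_dom sip T y <-> (mp_dom ipH T1 y.1 /\ mp_dom ipH T2 y.1).
Proof.
split.
- move=> [y1 [[z k] [[[x1 x2] [D1 D2] <-] [oz ->]]]] /=.
  have [o1 o2] := fwd D1 D2 oz.
  split.
  + exists (app T1 x1), (app T2 x2 + z); split; first by exists x1.
    by split => //; rewrite addrA.
  + exists (app T2 x2), (app T1 x1 + z); split; first by exists x2.
    by split => //; rewrite addrCA addrA.
- case: y => h k /= [[r1 [z1 [h1 [o1 e1]]]] [r2 [z2 [h2 [o2 e2]]]]].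
  case: h1 => a1 D1 ea1; case: h2 => a2 D2 ea2. subst r1 r2.
  exists (app T (a1, a2)), (z1 - app T2 a2, k). split; first by exists (a1, a2).
  split; last exact: pair_dec.
  apply: combo o1 _ o2 _; [by exists a1 | by exists a2 | by rewrite -e1 -e2].
Qed.

Lemma val y : mp_dom sip T y ->
  mp_app sip sip T y = (mp_app ipH ipH T1 y.1, mp_app ipK ipH T2 y.1).
Proof.
case: y => h k.
move=> /dom_eq /= [[r1 [z1 [h1 [o1 e1]]]] [r2 [z2 [h2 [o2 e2]]]]].
have [x1 P1] := mp_ex hiH lin1 hH cl1 h1 o1. rewrite -e1 in P1.
have [x2 P2] := mp_ex hiH lin2 hK cl2 h2 o2. rewrite -e2 in P2.
have m1 : mp_app ipH ipH T1 h = x1.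
  apply: xget_unique; first exact: P1.
  by move=> x' Px'; apply: (mp_uniq hiH hiH lin1 Px' P1).
have m2 : mp_app ipK ipH T2 h = x2.
  apply: xget_unique; first exact: P2.
  by move=> x' Px'; apply: (mp_uniq hiK hiH lin2 Px' P2).
rewrite m1 m2.
case: (P1) => [[Dx1 ox1] [w1 [ow1 ew1]]].
case: (P2) => [[Dx2 ox2] [w2 [ow2 ew2]]].
apply: xget_unique.
- split.
    split; first by split.
    move=> [a b] [[Da Db] Tab].
    have e0 : app T1 a + app T2 b = 0 := congr1 fst Tab.
    have Ta0 : app T1 a = 0.
      apply: (ip_eq0 hiH).
      have e3 : app T1 a = - app T2 b by apply/eqP; rewrite -addr_eq0 e0.
      rewrite {2}e3 (ipNr hiH) horth ?oppr0 //; [by exists a | by exists b].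
    have Tb0 : app T2 b = 0 by rewrite Ta0 add0r in e0.
    by rewrite /sip /sum_ip /= (ox1 a (conj Da Ta0)) (ox2 b (conj Db Tb0)) addr0.
  exists (w1 - app T2 x2, k). split; last exact: pair_dec.
  apply: combo ow1 _ ow2 _; [by exists x1 | by exists x2 | by rewrite -ew1 -ew2].
- move=> [x1' x2'] [[[D1' D2'] ok] [[z k'] [oz ey]]].
  have ey1 : h = app T1 x1' + app T2 x2' + z := congr1 fst ey.
  have [o1' o2'] := fwd D1' D2' oz.
  have P1' : PP ipH ipH T1 h x1'.
    split.
      split => // a [Da Ta].
      have kA : kernel_op T (a, 0).
        split; first by split => //; exact: (dom0 lin2).
        by rewrite /T /= Ta (app0 lin2) addr0.
      have := ok _ kA.
      by rewrite /sip /sum_ip /= (ip0l hiK) addr0.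
    exists (app T2 x2' + z); split => //. by rewrite addrA.
  have P2' : PP ipK ipH T2 h x2'.
    split.
      split => // b [Db Tb].
      have kB : kernel_op T (0, b).
        split; first by split => //; exact: (dom0 lin1).
        by rewrite /T /= Tb (app0 lin1) addr0.
      have := ok _ kB.
      by rewrite /sip /sum_ip /= (ip0l hiH) add0r.
    exists (app T1 x1' + z); split => //. by rewrite addrCA addrA.
  by rewrite (mp_uniq hiH hiH lin1 P1' P1) (mp_uniq hiK hiH lin2 P2' P2).
Qed.

End Main.

Unset Implicit Arguments.
Set Strict Implicit.
Local Close Scope complex_scope.

Theorem theorem2p23 (R : realType)
  (H : lmodType R[i]) (ipH : H -> H -> R[i])
  (K : lmodType R[i]) (ipK : K -> K -> R[i])
  (hH : is_hilbert ipH) (hK : is_hilbert ipK)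
  (T1 : op H H) (T2 : op K H)
  (hT1d : densely_defined ipH T1) (hT1c : closed_op ipH ipH T1)
  (hT1r : closed_range ipH T1)
  (hT2d : densely_defined ipK T2) (hT2c : closed_op ipK ipH T2)
  (hT2r : closed_range ipH T2)
  (horth : forall y1 y2 : H, range_op T1 y1 -> range_op T2 y2 -> ipH y1 y2 = 0) :
  op_eq (mp_inverse (sum_ip ipH ipK) (sum_ip ipH ipK) (upper_row_op T1 T2))
        (left_col_op (mp_inverse ipH ipH T1) (mp_inverse ipK ipH T2)).
Proof.
split.
  apply: funext => y; apply: propext. exact: (dom_eq hH hK hT1c hT2c horth).
move=> y hy. exact: (val hH hK hT1c hT2c horth hy).
Qed.
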